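(* For any forecasting system $\varphi$ and any countable set $\mathscr S$ of selection processes, there is at least one path $\omega\in\Omega$ that is $\mathscr S$-random for $\varphi$.
   Context: $\Omega=\{0,1\}^{\mathbb N}$ is the set of paths $\omega=(\omega_1,\omega_2,\dots)$, $\omega_{1:n}=(\omega_1,\dots,\omega_n)$, $\omega_{1:0}$ the empty sequence; $\mathbb S=\bigcup_{n\ge0}\{0,1\}^n$ the set of situations. A forecasting system is a map $\varphi$ from $\mathbb S$ to closed subintervals of $[0,1]$, with $\underline\varphi(s)=\min\varphi(s)$, $\overline\varphi(s)=\max\varphi(s)$. A selection process is a map $S:\mathbb S\to\{0,1\}$. For a countable set $\mathscr S$ of selection processes, $\omega$ is $\mathscr S$-random for $\varphi$ if for every $S\in\mathscr S$ with $\lim_n\sum_{k=0}^{n-1}S(\omega_{1:k})=\infty$: $\liminf_n\frac{\sum_{k=0}^{n-1}S(\omega_{1:k})[\omega_{k+1}-\underline\varphi(\omega_{1:k})]}{\sum_{k=0}^{n-1}S(\omega_{1:k})}\ge0$ and $\limsup_n\frac{\sum_{k=0}^{n-1}S(\omega_{1:k})[\omega_{k+1}-\overline\varphi(\omega_{1:k})]}{\sum_{k=0}^{n-1}S(\omega_{1:k})}\le0$. *)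

(* Defs.v *)
From Stdlib Require Import Reals List.
Open Scope R_scope.

(* Situations: finite binary sequences. Paths: infinite binary sequences,
   w : nat -> bool, with omega_{k+1} = w k (0-indexed). *)
Definition situation := list bool.
Definition path := nat -> bool.

Definition prefix (w : path) (n : nat) : situation := List.map w (List.seq 0 n).

Definition b2R (b : bool) : R := if b then 1 else 0.

Record forecasting_system := {
  fs_lo : situation -> R;
  fs_hi : situation -> R;
  fs_lo_ge0 : forall s, 0 <= fs_lo s;
  fs_lo_le_hi : forall s, fs_lo s <= fs_hi s;
  fs_hi_le1 : forall s, fs_hi s <= 1 }.

Definition selection := situation -> bool.

Fixpoint psum (f : nat -> R) (n : nat) : R :=
  match n with O => 0 | S m => psum f m + f m end.

Definition sel_count (S : selection) (w : path) (n : nat) : R :=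
  psum (fun k => b2R (S (prefix w k))) n.

Definition avg_dev (S : selection) (w : path) (g : situation -> R) (n : nat) : R :=
  psum (fun k => b2R (S (prefix w k)) * (b2R (w k) - g (prefix w k))) n
  / sel_count S w n.

Definition diverges_to_infty (u : nat -> R) : Prop :=
  forall M, exists N, forall n, (N <= n)%nat -> M < u n.

Definition liminf_ge0 (u : nat -> R) : Prop :=
  forall eps, 0 < eps -> exists N, forall n, (N <= n)%nat -> - eps < u n.

Definition limsup_le0 (u : nat -> R) : Prop :=
  forall eps, 0 < eps -> exists N, forall n, (N <= n)%nat -> u n < eps.

Definition countable_set {T : Type} (P : T -> Prop) : Prop :=
  exists f : nat -> option T, forall x, P x -> exists n, f n = Some x.

Definition S_random (SS : selection -> Prop) (phi : forecasting_system) (w : path) : Prop :=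
  forall S, SS S -> diverges_to_infty (sel_count S w) ->
    liminf_ge0 (avg_dev S w (fs_lo phi)) /\ limsup_le0 (avg_dev S w (fs_hi phi)).

(* Main.v *)
Require Import Defs.
From Stdlib Require Import Reals List.
From Stdlib Require Import Lra Lia Cantor.
Open Scope R_scope.

Lemma psum_ext f g n : (forall k, (k < n)%nat -> f k = g k) -> psum f n = psum g n.
Proof. induction n; simpl; intros H; [reflexivity|].
  rewrite IHn by (intros; apply H; lia). rewrite H by lia. reflexivity. Qed.

Lemma psum_le f g n : (forall k, (k < n)%nat -> f k <= g k) -> psum f n <= psum g n.
Proof. induction n; simpl; intros H; [lra|].
  assert (f n <= g n) by (apply H; lia).
  assert (psum f n <= psum g n) by (apply IHn; intros; apply H; lia). lra. Qed.

Lemma psum_plus f g n : psum (fun k => f k + g k) n = psum f n + psum g n.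
Proof. induction n; simpl; [lra|]. rewrite IHn; lra. Qed.

Lemma psum_scal c f n : psum (fun k => c * f k) n = c * psum f n.
Proof. induction n; simpl; [lra|]. rewrite IHn; lra. Qed.

Lemma psum_zero n : psum (fun _ => 0) n = 0.
Proof. induction n; simpl; [lra|]. rewrite IHn; lra. Qed.

Lemma psum_nonneg f n : (forall k, 0 <= f k) -> 0 <= psum f n.
Proof. intros H; induction n; simpl; [lra|]. specialize (H n); lra. Qed.

Lemma psum_term f n j : (forall k, 0 <= f k) -> (j < n)%nat -> f j <= psum f n.
Proof. induction n; simpl; intros H Hj; [lia|].
  destruct (Nat.eq_dec j n).
  - subst. pose proof (psum_nonneg f n H). lra.
  - assert (f j <= psum f n) by (apply IHn; auto; lia). specialize (H n). lra. Qed.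

Lemma psum_ind_count j n :
  psum (fun k => if (j <=? k)%nat then 0 else 1) n = INR (Nat.min n j).
Proof. induction n; cbn [psum]; [reflexivity|]. rewrite IHn.
  destruct (Nat.leb_spec j n).
  - replace (Nat.min (S n) j) with (Nat.min n j) by lia. lra.
  - replace (Nat.min (S n) j) with (S (Nat.min n j)) by lia. rewrite S_INR. lra. Qed.

Lemma prefix_ext w w' n : (forall k, (k < n)%nat -> w k = w' k) -> prefix w n = prefix w' n.
Proof. intros H. unfold prefix. apply map_ext_in. intros a Ha. apply in_seq in Ha. apply H. lia. Qed.

Lemma prefix_S w n : prefix w (S n) = prefix w n ++ w n :: nil.
Proof. unfold prefix. rewrite seq_S, map_app. reflexivity. Qed.

Lemma prefix_length w n : length (prefix w n) = n.
Proof. unfold prefix. rewrite length_map, length_seq. reflexivity. Qed.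

Lemma nth_prefix w n k : (k < n)%nat -> nth k (prefix w n) false = w k.
Proof. intros. rewrite nth_indep with (d' := w 0%nat) by (rewrite prefix_length; lia).
  unfold prefix. rewrite map_nth, seq_nth by lia. reflexivity. Qed.

Lemma exp_bound y : y <= 1/2 -> exp y <= 1 + y + 2 * y ^ 2.
Proof. intros Hy.
  pose proof (exp_ineq1_le (- y)) as H1.
  assert (E : exp y * exp (- y) = 1) by (rewrite <- exp_plus; replace (y + - y) with 0 by ring; apply exp_0).
  pose proof (exp_pos y).
  assert (exp y * (1 - y) <= 1).
  { rewrite <- E. apply Rmult_le_compat_l; lra. }
  assert (1 <= (1 + y + 2 * y ^ 2) * (1 - y)) by nra.
  nra. Qed.

Lemma key2 p d y1 y0 : 0 <= p <= 1 -> 0 < d <= 1/2 -> -d <= y1 <= d -> -d <= y0 <= d ->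
  p * y1 + (1 - p) * y0 <= 0 ->
  p * exp (y1 - 2 * d ^ 2) + (1 - p) * exp (y0 - 2 * d ^ 2) <= 1.
Proof. intros Hp Hd H1 H0 Hm.
  unfold Rminus. rewrite !exp_plus.
  set (E := exp (- (2 * d ^ 2))).
  assert (HE : E * (1 + 2 * d ^ 2) <= 1).
  { unfold E. pose proof (exp_ineq1_le (2 * d ^ 2)).
    assert (Ee : exp (- (2 * d ^ 2)) * exp (2 * d ^ 2) = 1)
      by (rewrite <- exp_plus; replace (- (2 * d ^ 2) + 2 * d ^ 2) with 0 by ring; apply exp_0).
    pose proof (exp_pos (- (2 * d ^ 2))). nra. }
  assert (HEp : 0 < E) by apply exp_pos.
  pose proof (exp_bound y1 ltac:(lra)). pose proof (exp_bound y0 ltac:(lra)).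
  assert (exp y1 <= 1 + y1 + 2 * d ^ 2) by nra.
  assert (exp y0 <= 1 + y0 + 2 * d ^ 2) by nra.
  assert (p * exp y1 + (1 - p) * exp y0 <= 1 + 2 * d ^ 2) by nra.
  nra. Qed.

Definition sel (f : nat -> option selection) i : selection :=
  match f i with Some s0 => s0 | None => fun _ => false end.
Definition dl (m : nat) : R := / (INR m + 2).
Definition wt (j : nat) : R := (/2) ^ (S j).

Definition tlo phi f j (s : situation) (b : bool) : R :=
  if sel f (fst (of_nat j)) s then
    - dl (snd (of_nat j)) * (b2R b - fs_lo phi s) - 2 * dl (snd (of_nat j)) ^ 2 else 0.
Definition thi phi f j (s : situation) (b : bool) : R :=
  if sel f (fst (of_nat j)) s then
    dl (snd (of_nat j)) * (b2R b - fs_hi phi s) - 2 * dl (snd (of_nat j)) ^ 2 else 0.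

Definition Lg (t : nat -> situation -> bool -> R) j (w : path) n :=
  psum (fun k => if (j <=? k)%nat then t j (prefix w k) (w k) else 0) n.

Definition Fv phi f w n b :=
  psum (fun j => wt j * (exp (Lg (tlo phi f) j w n) * exp (tlo phi f j (prefix w n) b)
                       + exp (Lg (thi phi f) j w n) * exp (thi phi f j (prefix w n) b))) (S n).
Definition Phi phi f w n :=
  psum (fun j => wt j * (exp (Lg (tlo phi f) j w n) + exp (Lg (thi phi f) j w n))) (S n).

Definition next phi f (s : situation) : bool :=
  if Rle_dec (Fv phi f (fun k => nth k s false) (length s) true)
             (Fv phi f (fun k => nth k s false) (length s) false) then true else false.

Fixpoint build phi f n : situation :=
  match n with O => nil | S n => build phi f n ++ next phi f (build phi f n) :: nil end.
Definition wpath phi f : path := fun n => next phi f (build phi f n).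

Lemma build_prefix phi f n : prefix (wpath phi f) n = build phi f n.
Proof. induction n; [reflexivity|]. rewrite prefix_S, IHn. reflexivity. Qed.

Lemma Lg_ext t j w w' n : (forall k, (k < n)%nat -> w k = w' k) -> Lg t j w n = Lg t j w' n.
Proof. intros H. unfold Lg. apply psum_ext. intros k Hk.
  rewrite (prefix_ext w w' k) by (intros; apply H; lia). rewrite H by lia. reflexivity. Qed.

Lemma Fv_ext phi f w w' n b : (forall k, (k < n)%nat -> w k = w' k) -> Fv phi f w n b = Fv phi f w' n b.
Proof. intros H. unfold Fv. apply psum_ext. intros k Hk.
  rewrite (prefix_ext w w' n) by auto.
  rewrite (Lg_ext _ _ w w' n) by auto. rewrite (Lg_ext (thi phi f) _ w w' n) by auto. reflexivity. Qed.

Lemma choice phi f n b : Fv phi f (wpath phi f) n (wpath phi f n) <= Fv phi f (wpath phi f) n b.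
Proof.
  set (w := wpath phi f).
  assert (Hw : w n = next phi f (prefix w n)) by (unfold w; rewrite build_prefix; reflexivity).
  assert (He : forall b', Fv phi f (fun k => nth k (prefix w n) false) (length (prefix w n)) b'
                     = Fv phi f w n b').
  { intros b'. rewrite prefix_length. apply Fv_ext. intros k Hk. apply nth_prefix; auto. }
  rewrite Hw. unfold next. rewrite !He.
  destruct (Rle_dec (Fv phi f w n true) (Fv phi f w n false)); destruct b; lra. Qed.

Lemma dl_pos m : 0 < dl m <= 1/2.
Proof. unfold dl. pose proof (pos_INR m). split.
  - apply Rinv_0_lt_compat; lra.
  - replace (1/2) with (/2) by field. apply Rinv_le_contravar; lra. Qed.

Lemma lo_hi phi s : 0 <= fs_lo phi s <= 1 /\ 0 <= fs_hi phi s <= 1 /\ fs_lo phi s <= fs_hi phi s.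
Proof. pose proof (fs_lo_ge0 phi s). pose proof (fs_lo_le_hi phi s). pose proof (fs_hi_le1 phi s). lra. Qed.

Lemma local_lo phi f j s :
  fs_lo phi s * exp (tlo phi f j s true) + (1 - fs_lo phi s) * exp (tlo phi f j s false) <= 1.
Proof. unfold tlo. destruct (lo_hi phi s) as [[? ?] [[? ?] ?]].
  destruct (sel f (fst (of_nat j)) s).
  - pose proof (dl_pos (snd (of_nat j))). simpl b2R. apply key2; try lra; nra.
  - rewrite exp_0. lra. Qed.

Lemma local_hi phi f j s :
  fs_lo phi s * exp (thi phi f j s true) + (1 - fs_lo phi s) * exp (thi phi f j s false) <= 1.
Proof. unfold thi. destruct (lo_hi phi s) as [[? ?] [[? ?] ?]].
  destruct (sel f (fst (of_nat j)) s).
  - pose proof (dl_pos (snd (of_nat j))). simpl b2R. apply key2; try lra; nra.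
  - rewrite exp_0. lra. Qed.

Lemma wt_pos j : 0 < wt j <= 1.
Proof. unfold wt. induction (S j); simpl; lra. Qed.

Lemma mix phi f w n :
  fs_lo phi (prefix w n) * Fv phi f w n true + (1 - fs_lo phi (prefix w n)) * Fv phi f w n false
  <= Phi phi f w n.
Proof. unfold Fv, Phi. rewrite <- !psum_scal, <- psum_plus. apply psum_le. intros k _.
  set (p := fs_lo phi (prefix w n)).
  pose proof (local_lo phi f k (prefix w n)). pose proof (local_hi phi f k (prefix w n)).
  fold p in H, H0.
  set (a := exp (Lg (tlo phi f) k w n)). set (c := exp (Lg (thi phi f) k w n)).
  assert (0 < a) by apply exp_pos. assert (0 < c) by apply exp_pos.
  pose proof (wt_pos k).
  assert (a * (p * exp (tlo phi f k (prefix w n) true) + (1 - p) * exp (tlo phi f k (prefix w n) false)) <= a) by nra.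
  assert (c * (p * exp (thi phi f k (prefix w n) true) + (1 - p) * exp (thi phi f k (prefix w n) false)) <= c) by nra.
  assert (wt k * (a * (p * exp (tlo phi f k (prefix w n) true) + (1 - p) * exp (tlo phi f k (prefix w n) false))
    + c * (p * exp (thi phi f k (prefix w n) true) + (1 - p) * exp (thi phi f k (prefix w n) false)))
    <= wt k * (a + c)) by (apply Rmult_le_compat_l; lra).
  nra. Qed.

Lemma Lg_late t j w n : (n <= j)%nat -> Lg t j w n = 0.
Proof. intros H. unfold Lg. transitivity (psum (fun _ => 0) n); [|apply psum_zero]. apply psum_ext. intros k Hk.
  destruct (Nat.leb_spec j k); [lia|reflexivity]. Qed.

Lemma Lg_S t j w n : (j <= n)%nat -> Lg t j w (S n) = Lg t j w n + t j (prefix w n) (w n).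
Proof. intros H. unfold Lg at 1. simpl. fold (Lg t j w n).
  destruct (Nat.leb_spec j n); [reflexivity|lia]. Qed.

Lemma Phi_bound phi f n : Phi phi f (wpath phi f) n <= 2 - 2 * (/2) ^ (S n).
Proof.
  set (w := wpath phi f).
  induction n.
  - unfold Phi, Lg. simpl. rewrite exp_0. unfold wt. simpl. lra.
  - assert (Heq : Phi phi f w (S n) = wt (S n) * 2 + Fv phi f w n (w n)).
    { unfold Phi. change (psum ?g (S (S n))) with (psum g (S n) + g (S n)).
      cbv beta. rewrite !(Lg_late _ (S n)) by lia. rewrite exp_0. unfold Fv.
      rewrite (psum_ext _ (fun j => wt j * (exp (Lg (tlo phi f) j w n) * exp (tlo phi f j (prefix w n) (w n)) +
        exp (Lg (thi phi f) j w n) * exp (thi phi f j (prefix w n) (w n)))) (S n)).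
      - lra.
      - intros k Hk. rewrite !Lg_S by lia. rewrite !exp_plus. reflexivity. }
    rewrite Heq.
    pose proof (choice phi f n true). pose proof (choice phi f n false). fold w in H, H0.
    pose proof (mix phi f w n).
    destruct (lo_hi phi (prefix w n)) as [[? ?] _].
    assert (Fv phi f w n (w n) <= Phi phi f w n) by nra.
    change ((/2) ^ (S (S n))) with (/2 * (/2) ^ (S n)).
    unfold wt. change ((/2) ^ (S (S n))) with (/2 * (/2) ^ (S n)). lra. Qed.

Lemma Lg_lo_bound phi f j n : Lg (tlo phi f) j (wpath phi f) n <= ln (2 / wt j).
Proof.
  pose proof (wt_pos j).
  assert (HC : exp (Lg (tlo phi f) j (wpath phi f) n) <= 2 / wt j).
  { destruct (Compare_dec.le_lt_dec n j).
    - rewrite Lg_late by auto. rewrite exp_0. apply Rmult_le_reg_l with (wt j); [lra|].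
      field_simplify; lra.
    - pose proof (Phi_bound phi f n). pose proof (pow_lt (/2) (S n) ltac:(lra)).
      assert (wt j * (exp (Lg (tlo phi f) j (wpath phi f) n) + exp (Lg (thi phi f) j (wpath phi f) n)) <= Phi phi f (wpath phi f) n).
      { unfold Phi. apply (psum_term (fun j => wt j * (exp (Lg (tlo phi f) j (wpath phi f) n) + exp (Lg (thi phi f) j (wpath phi f) n)))).
        - intros k. pose proof (wt_pos k). pose proof (exp_pos (Lg (tlo phi f) k (wpath phi f) n)).
          pose proof (exp_pos (Lg (thi phi f) k (wpath phi f) n)). nra.
        - lia. }
      pose proof (exp_pos (Lg (thi phi f) j (wpath phi f) n)).
      apply Rmult_le_reg_l with (wt j); [lra|]. field_simplify; [|lra]. nra. }
  destruct (Rle_dec (Lg (tlo phi f) j (wpath phi f) n) (ln (2 / wt j))) as [|Hn]; auto.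
  exfalso. apply Rnot_le_lt in Hn. apply exp_increasing in Hn.
  rewrite exp_ln in Hn. lra. apply Rdiv_lt_0_compat; lra. Qed.

Lemma Lg_hi_bound phi f j n : Lg (thi phi f) j (wpath phi f) n <= ln (2 / wt j).
Proof.
  pose proof (wt_pos j).
  assert (HC : exp (Lg (thi phi f) j (wpath phi f) n) <= 2 / wt j).
  { destruct (Compare_dec.le_lt_dec n j).
    - rewrite Lg_late by auto. rewrite exp_0. apply Rmult_le_reg_l with (wt j); [lra|].
      field_simplify; lra.
    - pose proof (Phi_bound phi f n). pose proof (pow_lt (/2) (S n) ltac:(lra)).
      assert (wt j * (exp (Lg (tlo phi f) j (wpath phi f) n) + exp (Lg (thi phi f) j (wpath phi f) n)) <= Phi phi f (wpath phi f) n).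
      { unfold Phi. apply (psum_term (fun j => wt j * (exp (Lg (tlo phi f) j (wpath phi f) n) + exp (Lg (thi phi f) j (wpath phi f) n)))).
        - intros k. pose proof (wt_pos k). pose proof (exp_pos (Lg (tlo phi f) k (wpath phi f) n)).
          pose proof (exp_pos (Lg (thi phi f) k (wpath phi f) n)). nra.
        - lia. }
      pose proof (exp_pos (Lg (tlo phi f) j (wpath phi f) n)).
      apply Rmult_le_reg_l with (wt j); [lra|]. field_simplify; [|lra]. nra. }
  destruct (Rle_dec (Lg (thi phi f) j (wpath phi f) n) (ln (2 / wt j))) as [|Hn]; auto.
  exfalso. apply Rnot_le_lt in Hn. apply exp_increasing in Hn.
  rewrite exp_ln in Hn. lra. apply Rdiv_lt_0_compat; lra. Qed.

Lemma tlo_le1 phi f j s b : tlo phi f j s b <= 1.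
Proof. unfold tlo. destruct (lo_hi phi s) as [[? ?] [[? ?] ?]].
  pose proof (dl_pos (snd (of_nat j))).
  destruct (sel f _ s); [|lra]. destruct b; simpl; nra. Qed.

Lemma thi_le1 phi f j s b : thi phi f j s b <= 1.
Proof. unfold thi. destruct (lo_hi phi s) as [[? ?] [[? ?] ?]].
  pose proof (dl_pos (snd (of_nat j))).
  destruct (sel f _ s); [|lra]. destruct b; simpl; nra. Qed.

Lemma ungated_le (t : nat -> situation -> bool -> R) j w n :
  (forall s b, t j s b <= 1) ->
  psum (fun k => t j (prefix w k) (w k)) n <= Lg t j w n + INR j.
Proof. intros Ht.
  apply Rle_trans with (psum (fun k => (if (j <=? k)%nat then t j (prefix w k) (w k) else 0)
                                      + (if (j <=? k)%nat then 0 else 1)) n).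
  - apply psum_le. intros k _. destruct (j <=? k)%nat; [lra|]. specialize (Ht (prefix w k) (w k)). lra.
  - rewrite psum_plus, psum_ind_count. fold (Lg t j w n).
    assert (INR (Nat.min n j) <= INR j) by (apply le_INR; lia). lra. Qed.

Definition numer (S : selection) (w : path) (g : situation -> R) n :=
  psum (fun k => b2R (S (prefix w k)) * (b2R (w k) - g (prefix w k))) n.

Lemma sum_tlo phi f j w n :
  psum (fun k => tlo phi f j (prefix w k) (w k)) n =
  - dl (snd (of_nat j)) * numer (sel f (fst (of_nat j))) w (fs_lo phi) n
  + (- (2 * dl (snd (of_nat j)) ^ 2)) * sel_count (sel f (fst (of_nat j))) w n.
Proof. unfold numer, sel_count. rewrite <- !psum_scal, <- psum_plus. apply psum_ext.
  intros k _. unfold tlo. destruct (sel f _ _); simpl; ring. Qed.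

Lemma sum_thi phi f j w n :
  psum (fun k => thi phi f j (prefix w k) (w k)) n =
  dl (snd (of_nat j)) * numer (sel f (fst (of_nat j))) w (fs_hi phi) n
  + (- (2 * dl (snd (of_nat j)) ^ 2)) * sel_count (sel f (fst (of_nat j))) w n.
Proof. unfold numer, sel_count. rewrite <- !psum_scal, <- psum_plus. apply psum_ext.
  intros k _. unfold thi. destruct (sel f _ _); simpl; ring. Qed.

Lemma pick_m eps : 0 < eps -> exists m, 4 * dl m < eps.
Proof. intros He. destruct (INR_unbounded (4 / eps)) as [m Hm]. exists m.
  unfold dl. pose proof (pos_INR m).
  assert (eps * INR m > 4).
  { apply Rmult_gt_compat_l with (r := eps) in Hm; auto.
    replace (eps * (4 / eps)) with 4 in Hm by (field; lra). lra. }
  apply Rmult_lt_reg_r with (INR m + 2); [lra|].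
  replace (4 * / (INR m + 2) * (INR m + 2)) with 4 by (field; lra). nra. Qed.

Theorem corollary25 (phi : forecasting_system) (SS : selection -> Prop) :
  countable_set SS -> exists w : path, S_random SS phi w.
Proof.
  intros [f Hf]. exists (wpath phi f). intros S HS Hdiv.
  destruct (Hf S HS) as [i Hi].
  assert (HSel : sel f i = S) by (unfold sel; rewrite Hi; reflexivity).
  set (w := wpath phi f).
  split.
  - intros eps Heps. destruct (pick_m eps Heps) as [m Hm].
    set (j := to_nat (i, m)). assert (Hj : of_nat j = (i, m)) by apply cancel_of_to.
    set (d := dl m). pose proof (dl_pos m) as Hd. fold d in Hd, Hm.
    set (K := ln (2 / wt j) + INR j).
    assert (HU : forall n, - d * numer S w (fs_lo phi) n + (- (2 * d ^ 2)) * sel_count S w n <= K).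
    { intros n. pose proof (sum_tlo phi f j w n) as E. rewrite Hj in E. cbn [fst snd] in E. rewrite HSel in E.
      fold d in E. rewrite <- E. unfold K.
      pose proof (Lg_lo_bound phi f j n). fold w in H.
      pose proof (ungated_le (tlo phi f) j w n (tlo_le1 phi f j)). lra. }
    destruct (Hdiv (2 * Rabs K / (d * eps))) as [N0 HN0]. exists N0. intros n Hn.
    specialize (HN0 n Hn). specialize (HU n). fold w in HN0.
    change (avg_dev S w (fs_lo phi) n) with (numer S w (fs_lo phi) n / sel_count S w n).
    set (A := numer S w (fs_lo phi) n) in *. set (N := sel_count S w n) in *.
    assert (Hde : 0 < d * eps) by nra.
    assert (HM : 2 * Rabs K / (d * eps) >= 0).
    { unfold Rdiv. pose proof (Rabs_pos K). pose proof (Rinv_0_lt_compat _ Hde). nra. }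
    assert (HN : 0 < N) by lra.
    assert (H1 : d * eps * N / 2 > Rabs K).
    { apply Rmult_gt_compat_l with (r := d * eps / 2) in HN0; [|lra].
      replace (d * eps / 2 * (2 * Rabs K / (d * eps))) with (Rabs K) in HN0 by (field; lra). lra. }
    pose proof (Rle_abs K).
    assert (H2 : eps * d / 2 - 2 * d ^ 2 >= 0).
    { assert (0 <= d * (eps - 4 * d)) by (apply Rmult_le_pos; lra). nra. }
    assert (H3 : (eps * d / 2 - 2 * d ^ 2) * N >= 0) by (apply Rle_ge, Rmult_le_pos; lra).
    assert (H4 : d * A > - eps * d * N) by nra.
    assert (H5 : A > - eps * N) by nra.
    apply Rmult_lt_reg_r with N; auto. unfold Rdiv. rewrite Rmult_assoc, Rinv_l by lra. lra.
  - intros eps Heps. destruct (pick_m eps Heps) as [m Hm].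
    set (j := to_nat (i, m)). assert (Hj : of_nat j = (i, m)) by apply cancel_of_to.
    set (d := dl m). pose proof (dl_pos m) as Hd. fold d in Hd, Hm.
    set (K := ln (2 / wt j) + INR j).
    assert (HU : forall n, d * numer S w (fs_hi phi) n + (- (2 * d ^ 2)) * sel_count S w n <= K).
    { intros n. pose proof (sum_thi phi f j w n) as E. rewrite Hj in E. cbn [fst snd] in E. rewrite HSel in E.
      fold d in E. rewrite <- E. unfold K.
      pose proof (Lg_hi_bound phi f j n). fold w in H.
      pose proof (ungated_le (thi phi f) j w n (thi_le1 phi f j)). lra. }
    destruct (Hdiv (2 * Rabs K / (d * eps))) as [N0 HN0]. exists N0. intros n Hn.
    specialize (HN0 n Hn). specialize (HU n). fold w in HN0.
    change (avg_dev S w (fs_hi phi) n) with (numer S w (fs_hi phi) n / sel_count S w n).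
    set (A := numer S w (fs_hi phi) n) in *. set (N := sel_count S w n) in *.
    assert (Hde : 0 < d * eps) by nra.
    assert (HM : 2 * Rabs K / (d * eps) >= 0).
    { unfold Rdiv. pose proof (Rabs_pos K). pose proof (Rinv_0_lt_compat _ Hde). nra. }
    assert (HN : 0 < N) by lra.
    assert (H1 : d * eps * N / 2 > Rabs K).
    { apply Rmult_gt_compat_l with (r := d * eps / 2) in HN0; [|lra].
      replace (d * eps / 2 * (2 * Rabs K / (d * eps))) with (Rabs K) in HN0 by (field; lra). lra. }
    pose proof (Rle_abs K).
    assert (H2 : eps * d / 2 - 2 * d ^ 2 >= 0).
    { assert (0 <= d * (eps - 4 * d)) by (apply Rmult_le_pos; lra). nra. }
    assert (H3 : (eps * d / 2 - 2 * d ^ 2) * N >= 0) by (apply Rle_ge, Rmult_le_pos; lra).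
    assert (H4 : d * A < eps * d * N) by nra.
    assert (H5 : A < eps * N) by nra.
    apply Rmult_lt_reg_r with N; auto. unfold Rdiv. rewrite Rmult_assoc, Rinv_l by lra. lra.
Qed.
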